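(* Let $(M^n,c,v^m d\nu)$ be a smooth conformal measure space with characteristic constant $\mu$, $n\ge3$, $m\in\mathbb{R}\setminus\{-n,1-n,2-n\}$. Let $I\in\mathcal{T}$ and fix a scale $g\in c$; let $I$ have top component $\sigma$, middle $\omega$, bottom $\rho$, and let $T$ be the middle component of $\nabla^WI$ (the 2-tensor $T(x,z)=g(\nabla_x\omega+\sigma P^W(x)+\rho x,z)$). Then $$\operatorname{tr}T+mv^{-1}\langle I,\tilde J\rangle=(m+n)\rho+\delta_\phi\omega+\sigma\mathrm{J}^W,$$ where $\delta_\phi\omega=\operatorname{div}_g\omega+mv^{-1}g(\omega,\nabla v)$.
   Context: Conformal setting: $(M^n,c)$ a manifold with a conformal class of Riemannian metrics. $\mathcal{E}[w]$: conformal densities of weight $w$ (functions in a scale). Standard tractor bundle $\mathbb{T}\cong\mathbb{R}\oplus TM\oplus\mathbb{R}$ in a scale, tractor $I$ with top $\sigma$, middle $\omega$, bottom $\rho$; tractor metric $\langle I,K\rangle$ with $\langle I,I\rangle=2\sigma\rho+|\omega|^2$. $X$: top and middle $0$, bottom $1$. Schouten $P$, $\mathrm{J}=\operatorname{tr}P$. $\mathbb{D}v$ ($v\in\mathcal{E}[1]$): top $nv$, middle $n\nabla v$, bottom $-(\Delta v+\mathrm{J}v)$. SCMS: positive $v\in\mathcal{E}[1]$, $m\in\mathbb{R}$, fixed constant $\mu$. In a scale, $\mathrm{Ric}^m_\phi=\mathrm{Ric}-mv^{-1}\nabla^2v$, $R^m_\phi=R-2mv^{-1}\Delta v-m(m-1)v^{-2}|\nabla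 v|^2$, $\mathrm{J}^W=\frac{1}{2(m+n-1)}(R^m_\phi+m\mu v^{-2})$, $P^W=\frac{1}{m+n-2}(\mathrm{Ric}^m_\phi-\mathrm{J}^Wg)$ ($P^W(x)$ the vector dual to $P^W(x,\cdot)$). $J=\frac1n\mathbb{D}v$, $\tilde J=J+\frac{(m+2n-2)(\mu-(m-1)|J|^2)}{2(m+n-1)(m+n-2)\langle X,J\rangle}X$. The $W$-tractor connection $\nabla^W_xI$ has top $x\sigma-g(\omega,x)$, middle $\nabla_x\omega+\sigma P^W(x)+\rho x$, bottom $x\rho-P^W(x,\omega)$. *)

(* Defs.v *)
(* Pointwise (at one point of M, in an arbitrary basis of
   the tangent space) rendering of the tractor objects of the paper. *)
From HB Require Import structures.
From mathcomp Require Import all_boot all_order all_algebra.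
Set Implicit Arguments. Unset Strict Implicit. Unset Printing Implicit Defensive.
Import Order.TTheory GRing.Theory Num.Theory.
Local Open Scope ring_scope.

Section Pointwise.
Variables (R : realFieldType) (n : nat).
(* Tangent vectors are row vectors 'rV_n; bilinear forms are matrices B with
   B(x,z) = x *m B *m z^T; endomorphisms E act by x |-> x *m E.
   g is the Gram matrix of the metric at the point. *)
Variable g : 'M[R]_n.

Definition scal1 (A : 'M[R]_1) : R := A 0 0.
Definition gdot (x z : 'rV[R]_n) : R := scal1 (x *m g *m z^T).
Definition trg (B : 'M[R]_n) : R := \tr (B *m invmx g).

Definition scalR (Ric : 'M[R]_n) : R := trg Ric.
Definition schouten (Ric : 'M[R]_n) : 'M[R]_n :=
  (n%:R - 2)^-1 *: (Ric - (scalR Ric / (2 * (n%:R - 1))) *: g).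
Definition Jsch (Ric : 'M[R]_n) : R := trg (schouten Ric).

(* standard tractors in the scale g: top, middle, bottom *)
Record tractor := Tractor { ttop : R; tmid : 'rV[R]_n; tbot : R }.
Definition tmetric (I K : tractor) : R :=
  ttop I * tbot K + tbot I * ttop K + gdot (tmid I) (tmid K).
Definition tX : tractor := Tractor 0 0 1.
Definition tscale (c : R) (I : tractor) : tractor :=
  Tractor (c * ttop I) (c *: tmid I) (c * tbot I).
Definition tadd (I K : tractor) : tractor :=
  Tractor (ttop I + ttop K) (tmid I + tmid K) (tbot I + tbot K).

(* jet of v at the point: value v, gradient vector dv, Hessian form H *)
Definition lapl (H : 'M[R]_n) : R := trg H.
Definition tD (Ric : 'M[R]_n) (v : R) (dv : 'rV[R]_n) (H : 'M[R]_n) : tractor :=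
  Tractor (n%:R * v) (n%:R *: dv) (- (lapl H + Jsch Ric * v)).
Definition tJ Ric v dv H : tractor := tscale (n%:R)^-1 (tD Ric v dv H).

Variables (m mu : R).
Definition Ricmphi (Ric : 'M[R]_n) (v : R) (H : 'M[R]_n) : 'M[R]_n :=
  Ric - (m / v) *: H.
Definition Rmphi (Ric : 'M[R]_n) (v : R) (dv : 'rV[R]_n) (H : 'M[R]_n) : R :=
  scalR Ric - 2 * m / v * lapl H - m * (m - 1) / v ^+ 2 * gdot dv dv.
Definition JW Ric v dv H : R :=
  (2 * (m + n%:R - 1))^-1 * (Rmphi Ric v dv H + m * mu / v ^+ 2).
Definition PW Ric v dv H : 'M[R]_n :=
  (m + n%:R - 2)^-1 *: (Ricmphi Ric v H - JW Ric v dv H *: g).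

Definition tJtilde Ric v dv H : tractor :=
  let J := tJ Ric v dv H in
  tadd J (tscale ((m + 2 * n%:R - 2) * (mu - (m - 1) * tmetric J J)
                  / (2 * (m + n%:R - 1) * (m + n%:R - 2) * tmetric tX J)) tX).

(* middle component of nabla^W I as the 2-tensor
   T(x,z) = g(nabla_x omega + sigma P^W(x) + rho x, z),
   where Dom is the endomorphism x |-> nabla_x omega and
   P^W(x) = x *m PW *m g^{-1} is the vector dual to P^W(x,.) *)
Definition Wmid_form Ric v dv H (I : tractor) (Dom : 'M[R]_n) : 'M[R]_n :=
  (Dom + ttop I *: (PW Ric v dv H *m invmx g) + tbot I *: 1%:M) *m g.

Definition deltaphi (v : R) (dv : 'rV[R]_n) (om : 'rV[R]_n) (Dom : 'M[R]_n) : R :=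
  \tr Dom + m / v * gdot om dv.

End Pointwise.

(* Main.v *)
Require Import Defs.
From HB Require Import structures.
From mathcomp Require Import all_boot all_order all_algebra.
From mathcomp Require Import ring lra.
Import Order.TTheory GRing.Theory Num.Theory.
Local Open Scope ring_scope.

Theorem lemma5p13 (R : realFieldType) (n : nat) (g Ric H Dom : 'M[R]_n)
    (m mu v : R) (dv : 'rV[R]_n) (I : tractor R n) :
  (3 <= n)%N ->
  m != - n%:R -> m != 1 - n%:R -> m != 2 - n%:R ->
  g^T = g -> g \in unitmx -> (forall x : 'rV[R]_n, x != 0 -> 0 < gdot g x x) ->
  Ric^T = Ric -> H^T = H ->
  0 < v ->
  trg g (Wmid_form g m mu Ric v dv H I Dom)
    + m / v * tmetric g I (tJtilde g m mu Ric v dv H)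
  = (m + n%:R) * tbot I + deltaphi g m v dv (tmid I) Dom
    + ttop I * JW g m mu Ric v dv H.
Proof.
have trN : forall A : 'M[R]_n, \tr (- A) = - \tr A.
  by move=> A; rewrite -scaleN1r mxtraceZ mulN1r.
move=> n3 hm0 hm1 hm2 gT gu _ _ _ v0.
have nR0 : (n%:R : R) != 0 by rewrite pnatr_eq0 -lt0n (leq_trans _ n3).
have trgL : forall (a b : R) (A B : 'M[R]_n), trg g (a *: A + b *: B) = a * trg g A + b * trg g B.
  by move=> a b A B; rewrite /trg mulmxDl -!scalemxAl mxtraceD !mxtraceZ.
have trgg : trg g g = n%:R by rewrite /trg mulmxV // mxtrace1.
have dvE : (n%:R)^-1 *: (n%:R *: dv) = dv by rewrite scalerA mulVf // scale1r.
have tJE : tJ g Ric v dv H = Tractor v dv ((n%:R)^-1 * - (lapl g H + Jsch g Ric * v)).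
  by rewrite /tJ /tscale /tD /= dvE mulrA mulVf // mul1r.
have JschE : Jsch g Ric = scalR g Ric / (2 * (n%:R - 1)).
  rewrite /Jsch /schouten /trg -scalemxAl mxtraceZ mulmxBl -scalemxAl mxtraceD trN mxtraceZ.
  rewrite -/(trg g g) trgg /scalR /trg.
  have h1 : (n%:R : R) - 1 != 0.
    have e := natrB R (leq_trans (isT : (1 <= 3)%N) n3).
    by move: e => /= <-; rewrite pnatr_eq0 -lt0n subn_gt0 (leq_trans _ n3).
  have h2 : (n%:R : R) - 2 != 0.
    have e := natrB R (leq_trans (isT : (2 <= 3)%N) n3).
    by move: e => /= <-; rewrite pnatr_eq0 -lt0n subn_gt0.
  field; by rewrite h1 h2.
have WE : trg g (Wmid_form g m mu Ric v dv H I Dom) =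
   \tr Dom + ttop I * trg g (PW g m mu Ric v dv H) + tbot I * n%:R.
  rewrite /trg /Wmid_form mulmxK // !mxtraceD !mxtraceZ mxtrace1 //.
have PWE : trg g (PW g m mu Ric v dv H) = (m + n%:R - 2)^-1 *
   (scalR g Ric - m / v * lapl g H - JW g m mu Ric v dv H * n%:R).
  rewrite /PW /trg -scalemxAl mxtraceZ /Ricmphi !mulmxBl -!scalemxAl !mxtraceD !trN !mxtraceZ.
  by rewrite -/(trg g g) trgg.
rewrite WE PWE /tJtilde tJE /tmetric /tadd /tscale /tX /= !mul0r !mulr0 !addr0 !add0r !mul1r.
rewrite /deltaphi /JW /Rmphi JschE /gdot /scal1.
rewrite scaler0 addr0.
set a : R := (tmid I *m g *m dv^T) 0 0.
set q : R := (dv *m g *m dv^T) 0 0.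
rewrite !mul0mx mxE.
rewrite /deltaphi /=.
have h1 : m + n%:R - 1 != 0 by apply: contra hm1 => /eqP e; apply/eqP; lra.
have h2 : m + n%:R - 2 != 0 by apply: contra hm2 => /eqP e; apply/eqP; lra.
have h3 : (n%:R : R) - 1 != 0.
  have e := natrB R (leq_trans (isT : (1 <= 3)%N) n3).
  by move: e => /= <-; rewrite pnatr_eq0 -lt0n subn_gt0 (leq_trans _ n3).
have v0' : v != 0 by rewrite gt_eqF.
field; rewrite ?h1 ?h2 ?h3 ?v0' ?nR0 //.
Qed.
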